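(* Let $(X,d)$ be a finite metric space with $n$ points, doubling dimension $\dim$, and all inter-point distances greater than $1$; let $1\le k\le n-2$ be an integer, $0<\varepsilon\le\frac13$, $v\in X$, and let $Q$ and $H_Q$ be as constructed in the context. Then $H_Q$ is a $(k,1+3\varepsilon,v)$-vertex-fault-tolerant single-sink spanner for $Q\cup\{v\}$, i.e. for every $S\subseteq Q$ with $|S|\le k$ and every $x\in Q\setminus S$ we have $d_{H_Q\setminus S}(v,x)\le(1+3\varepsilon)d(v,x)$; moreover $H_Q$ has maximum degree $O(\Gamma k)$ and hop-diameter $O(\log n)$ (every $x\in Q$ is joined to $v$ in $H_Q$ by a path of length at most $(1+3\varepsilon)d(v,x)$ with $O(\log n)$ edges).
   Context: The doubling dimension $\dim$ is the smallest $\rho$ such that every ball can be covered by $2^\rho$ balls of half the radius. $B(x,r)=\{y: d(x,y)\le r\}$. A set $Y$ is an $r$-net of a set $U$ if $Y\subseteq U$, every point of $U$ is within distance $r$ of some point of $Y$, and distinct points of $Y$ are at distance $>r$. Let $\Delta=\max_{x,y}d(x,y)$, $\ell=\lceil\log_{1/\varepsilon}\Delta\rceil$, $r_0=1$ and $r_i=\varepsilon^{-i}$ for $i\in\{1,\dots,\ell\}$. Rings: $R_0=\{v\}$ and $R_i=B(v,r_i)\setminus B(v,r_{i-1})$ for $1\le i\le\ell$. For each $i\ge1$ let $N_i$ be an $\varepsilon r_{i-1}$-net of $R_i$, and let $\Gamma=\lceil\varepsilon^{-4\dim}\rceil$. For each $y\in N_i$ the cluster $C_y$ consists of the points $x\in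 R_i$ whose closest point in $N_i$ is $y$ (ties broken arbitrarily). For each such $y$ choose an arbitrary set of portals $Q_y\subseteq C_y$ with $|Q_y|=\min(k+1,|C_y|)$, and let $Q=\bigcup_{i\ge1}\bigcup_{y\in N_i}Q_y$. Write $Q=\{q_1,\dots,q_m\}$ with $d(v,q_1)\le\cdots\le d(v,q_m)$. For $j\ge1$ let $A_j=\{q_l: (j-1)(k+1)+1\le l\le j(k+1)\}$, let $A_0=\{v\}$ and $A_i=A_0$ for $i<0$. $H_Q$ is the graph on $Q\cup\{v\}$ obtained by, for every $j\ge1$ with $A_j\neq\emptyset$, adding an edge between every point of $A_j$ and every point of $A_{\lceil (j-2\Gamma-1)/2\rceil}$; edge weights are distances $d$. $H\setminus S$ denotes $H$ with vertices of $S$ removed. Implicit constants in $O(\cdot)$ are absolute. *)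

(* Defs.v *)
From HB Require Import structures.
From mathcomp Require Import all_boot all_order all_algebra.
From mathcomp Require Import all_classical all_reals all_analysis.
Set Implicit Arguments. Unset Strict Implicit. Unset Printing Implicit Defensive.
Import Order.TTheory GRing.Theory Num.Theory.
Local Open Scope ring_scope.

Section Defs.
Variables (R : realType) (T : finType) (d : T -> T -> R).

Definition is_metric : Prop :=
  [/\ forall x, d x x = 0,
      forall x y, d x y = d y x,
      forall x y z, d x z <= d x y + d y z
    & forall x y, x != y -> 0 < d x y].

Definition ball (x : T) (r : R) : {set T} := [set y | d x y <= r].

Definition doubling_ok (rho : R) : Prop :=
  forall (x : T) (r : R), exists Cs : {set T},
    (#|Cs|%:R <= 2 `^ rho) /\ ball x r \subset \bigcup_(c in Cs) ball c (r / 2).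

Definition is_doubling_dim (rho : R) : Prop :=
  doubling_ok rho /\ forall rho', doubling_ok rho' -> rho <= rho'.

Definition diam : R := \big[Num.max/0]_(x : T) \big[Num.max/0]_(y : T) d x y.

Definition is_net (r : R) (U Y : {set T}) : Prop :=
  [/\ Y \subset U,
      forall x, x \in U -> exists2 y, y \in Y & d x y <= r
    & forall y1 y2, y1 \in Y -> y2 \in Y -> y1 != y2 -> r < d y1 y2].

Variables (v : T) (eps : R) (k : nat).

Definition lvl : int := Num.ceil (ln diam / ln eps^-1).
Definition lvln : nat := `|lvl|%N.

Definition rad (i : nat) : R := eps^-1 ^+ i.

Definition ring (i : nat) : {set T} :=
  if i == 0%N then [set v]
  else [set x | (d v x <= rad i) && ~~ (d v x <= rad i.-1)].

Definition in_levels (i : nat) : bool := (1 <= i)%N && (i%:Z <= lvl).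

Variables (N : nat -> {set T}) (ctr : nat -> T -> T) (P : nat -> T -> {set T}).

Definition valid_nets : Prop :=
  forall i, in_levels i -> is_net (eps * rad i.-1) (ring i) (N i).

Definition valid_ctr : Prop :=
  forall i, in_levels i -> forall x, x \in ring i ->
    ctr i x \in N i /\ forall y, y \in N i -> d x (ctr i x) <= d x y.

Definition cluster (i : nat) (y : T) : {set T} :=
  [set x in ring i | ctr i x == y].

Definition valid_portals : Prop :=
  forall i, in_levels i -> forall y, y \in N i ->
    P i y \subset cluster i y /\ #|P i y| = minn k.+1 #|cluster i y|.

Definition Qset : {set T} :=
  \bigcup_(i < lvln.+1 | in_levels i) \bigcup_(y in N i) P i y.

Variable (q : seq T).

Definition valid_order : Prop :=
  perm_eq q (enum Qset) /\ sorted (fun a b => d v a <= d v b) q.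

(** groups A_j ; q_l (1-based) sits at 0-based index l-1 in q *)
Definition Agrp (j : int) : {set T} :=
  if (j <= 0)%R then [set v]
  else [set x | (x \in q) &&
         (((`|j|%N).-1 * k.+1 <= index x q) && (index x q < `|j|%N * k.+1))%N].

Variable (rho : R).

Definition Gamma : int := Num.ceil (eps `^ (- (4 * rho))).

Definition partner (j : int) : int :=
  Num.ceil ((j%:~R - 2 * Gamma%:~R - 1) / 2 : R).

Definition HQ_edge (x y : T) : Prop :=
  exists j : int, (0 < j)%R /\ Agrp j != finset.set0 /\
    ((x \in Agrp j /\ y \in Agrp (partner j)) \/
     (y \in Agrp j /\ x \in Agrp (partner j))).

End Defs.

Fixpoint is_walk (T : Type) (E : T -> T -> Prop) (x : T) (p : seq T) : Prop :=
  match p with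
  | [::] => True
  | y :: p' => E x y /\ is_walk E y p'
  end.

Fixpoint wlen (R : realType) (T : Type) (d : T -> T -> R) (x : T) (p : seq T) : R :=
  match p with
  | [::] => 0
  | y :: p' => d x y + wlen d y p'
  end.

(* Main.v *)
Require Import Defs.
From HB Require Import structures.
From mathcomp Require Import all_boot all_order all_algebra.
From mathcomp Require Import all_classical all_reals all_analysis.
From mathcomp Require Import zify ring lra.
Import Order.TTheory GRing.Theory Num.Theory.
Local Open Scope ring_scope.

Lemma card_bigcup_le (T I : finType) (A : {pred I}) (F : I -> {set T}) :
  (#|\bigcup_(i in A) F i| <= \sum_(i in A) #|F i|)%N.
Proof.
apply: (big_ind2 (fun (U : {set T}) n => #|U| <= n)%N) => //.
- by rewrite cards0.
- move=> U1 n1 U2 n2 h1 h2. apply: leq_trans (leq_card_setU _ _).1 _.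
  exact: leq_add.
Qed.

Section Pack.
Variables (R : realType) (T : finType) (d : T -> T -> R).
Hypothesis dsym : forall x y, d x y = d y x.
Hypothesis dtri : forall x y z, d x z <= d x y + d y z.

Lemma packing (B : R) :
  (forall x r, exists Cs : {set T}, #|Cs|%:R <= B /\
      Defs.ball d x r \subset \bigcup_(c in Cs) Defs.ball d c (r / 2)) ->
  forall m c r delta (Y : {set T}), Y \subset Defs.ball d c r ->
  (forall y1 y2, y1 \in Y -> y2 \in Y -> y1 != y2 -> delta < d y1 y2) ->
  2 * r <= 2 ^+ m * delta -> #|Y|%:R <= B ^+ m.
Proof.
move=> hB; elim=> [|m IH] c r delta Y hY hsep hr.
- rewrite expr0 lern1; apply/card_le1_eqP => y1 y2 h1 h2.
  apply/eqP; apply/negPn/negP => hne0; have hne : y1 != y2 by rewrite eq_sym.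
  have := hsep _ _ h1 h2 hne.
  move/fintype.subsetP: hY => hY.
  have := hY _ h1; have := hY _ h2; rewrite !inE => a2 a1.
  have := dtri y1 c y2; rewrite (dsym y1 c); rewrite expr0 in hr. lra.
- have [Cs [hCs hcov]] := hB c r.
  have B0 : 0 <= B by apply: le_trans hCs.
  have hsub : Y \subset \bigcup_(c' in Cs) (Y :&: Defs.ball d c' (r / 2)).
    apply/fintype.subsetP => y hy.
    have /bigcupP [c' hc' hyc'] := fintype.subsetP hcov y (fintype.subsetP hY y hy).
    by apply/bigcupP; exists c' => //; rewrite inE hy.
  have h1 := leq_trans (subset_leq_card hsub) (card_bigcup_le _ _ _ _).
  have h2 : (#|Y|%:R <= (\sum_(c0 in Cs) #|Y :&: Defs.ball d c0 (r / 2)|)%:R :> R) by rewrite ler_nat.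
  apply: le_trans h2 _.
  rewrite natr_sum.
  apply: le_trans (_ : \sum_(c' in Cs) B ^+ m <= _).
    apply: ler_sum => c' _; apply: (IH c' (r / 2) delta).
    + exact: subsetIr.
    + move=> y1 y2; rewrite !inE => /andP[h1' _] /andP[h2' _]; exact: hsep.
    + rewrite exprS in hr; lra.
  rewrite sumr_const -mulr_natl exprS.
  apply: ler_wpM2r => //; exact: exprn_ge0.
Qed.
End Pack.

Set Implicit Arguments. Unset Strict Implicit.


Lemma exists_m (R : realType) (eps : R) : 0 < eps -> 3 * eps <= 1 ->
   exists m : nat, 2 <= 2 ^+ m * eps ^+ 2 /\ 2 ^+ m * eps ^+ 2 < 4.
Proof.
move=> he0 H.
have he2 : 0 < eps ^+ 2 by apply: exprn_gt0.
have hex : exists n, (fun m : nat => 2 <= 2 ^+ m * eps ^+ 2 :> R) n.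
  have h0 : (0 : R) <= 2 / eps ^+ 2 by apply: divr_ge0 => //; exact: ltW.
  have := archi_boundP h0; set n := Num.Def.archi_bound _ => hn.
  exists n => /=.
  have : (n%:R : R) <= 2 ^+ n by rewrite -natrX ler_nat ltnW // ltn_expl.
  move=> h2; rewrite -ler_pdivrMr //.
  lra.
case: (ex_minnP hex) => m hm hmin; exists m; split => //.
case: m hm hmin => [|m] hm hmin.
  move: hm; rewrite expr0 mul1r expr2 => h.
  have : eps * eps <= eps / 3 by nra.
  lra.
have : ~~ (2 <= 2 ^+ m * eps ^+ 2 :> R).
  apply/negP => h; have := hmin m h; lia.
rewrite -ltNge => h; rewrite exprS -mulrA; lra.
Qed.

Definition posset (T : finType) (q : seq T) (lo hi : nat) : {set T} :=
  [set w | (w \in q) && ((lo <= index w q) && (index w q < hi))%N].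

Lemma card_pos_le (T : finType) (q : seq T) (x0 : T) lo hi :
  (#|posset q lo hi| <= hi - lo)%N.
Proof.
apply: leq_trans (_ : #|[seq nth x0 q i | i <- iota lo (hi - lo)]| <= _)%N;
  last by rewrite (leq_trans (card_size _)) // size_map size_iota.
apply: subset_leq_card; apply/fintype.subsetP => w; rewrite inE => /andP[wq /andP[h1 h2]].
apply/mapP; exists (index w q); first by rewrite mem_iota; lia.
by rewrite nth_index.
Qed.

Lemma card_pos_ge (T : finType) (q : seq T) (x0 : T) lo hi :
  uniq q -> (hi <= size q)%N -> (hi - lo <= #|posset q lo hi|)%N.
Proof.
move=> uq hs.
have u : uniq [seq nth x0 q i | i <- iota lo (hi - lo)].
  rewrite map_inj_in_uniq ?iota_uniq // => i j; rewrite !mem_iota => hi' hj'.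
  have hi2 : (i < size q)%N by lia.
  have hj2 : (j < size q)%N by lia.
  by move=> /eqP; rewrite nth_uniq // => /eqP.
rewrite -[X in (X <= _)%N](size_iota lo) -(size_map (nth x0 q)) -(card_uniqP u).
apply: subset_leq_card; apply/fintype.subsetP => w /mapP [i]; rewrite mem_iota => hi' ->.
have his : (i < size q)%N by lia.
by rewrite inE (mem_nth x0 his) index_uniq //=; lia.
Qed.


Lemma is_walk_rcons (T : Type) (E : T -> T -> Prop) x p y :
  is_walk E x (rcons p y) <-> is_walk E x p /\ E (last x p) y.
Proof.
elim: p x => [|z p IH] x /=; first by split; [case | case].
rewrite IH; tauto.
Qed.

Lemma wlen_rcons (R : realType) (T : Type) (d : T -> T -> R) x p y :
  wlen d x (rcons p y) = wlen d x p + d (last x p) y.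
Proof. by elim: p x => [|z p IH] x /=; [rewrite add0r addr0 | rewrite IH addrA]. Qed.

Lemma is_walk_mono (T : Type) (E E' : T -> T -> Prop) x p :
  is_walk E x p -> (forall a b, E a b -> E' a b) -> is_walk E' x p.
Proof.
move=> h hE; elim: p x h => [|y p IH] x //= [h1 h2]; split; [exact: hE | exact: IH].
Qed.

Lemma ln2_ge (R : realType) : 1 / 2 <= ln (2 : R).
Proof.
have h : (-1 : R) < - (1 / 2) by lra.
have := le_ln1Dx h.
have -> : (1 + - (1 / 2) : R) = 2^-1 by field.
rewrite lnV ?posrE; last lra.
lra.
Qed.

Lemma ln3_ge (R : realType) : 2 / 3 <= ln (3 : R).
Proof.
have h : (-1 : R) < - (2 / 3) by lra.
have := le_ln1Dx h.
have -> : (1 + - (2 / 3) : R) = 3^-1 by field.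
rewrite lnV ?posrE; last lra.
lra.
Qed.

Lemma hop_bound (R : realType) (n tl : nat) : (3 <= n)%N -> (2 ^ tl <= n)%N ->
  (tl.+2)%:R <= (6%N)%:R * ln (n%:R : R).
Proof.
move=> h3 h2.
have hn : (0 : R) < n%:R by rewrite ltr0n; lia.
have l3 : ln (3 : R) <= ln (n%:R : R).
  have h3r : (0 : R) < 3 by lra.
  by rewrite ler_ln ?posrE // (ler_nat R 3 n).
have lt : ln (2 : R) *+ tl <= ln (n%:R : R).
  rewrite -lnXn; last lra.
  have h2r : (0 : R) < 2 by lra.
  by rewrite ler_ln ?posrE ?exprn_gt0 // -natrX ler_nat.
have a2 := ln2_ge R; have a3 := ln3_ge R.
have p : 0 <= tl%:R * (ln (2 : R) - 1 / 2) by apply: mulr_ge0; [apply: ler0n | lra].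
move: lt; rewrite -[ln 2 *+ tl]mulr_natr => lt.
rewrite -addn2 natrD; lra.
Qed.


Section Main.
Variables (R : realType) (T : finType) (d : T -> T -> R) (rho eps : R) (k : nat)
    (v : T) (N : nat -> {set T}) (ctr : nat -> T -> T) (P : nat -> T -> {set T})
    (q : seq T).
Hypotheses (hmet : is_metric d) (hsep1 : forall x y : T, x != y -> 1 < d x y)
  (hdim : is_doubling_dim d rho) (hk1 : (1 <= k)%N) (hkn : (k <= #|T| - 2)%N)
  (he0 : 0 < eps) (he3 : eps <= 3^-1)
  (hnets : valid_nets d v eps N) (hctr : valid_ctr d v eps N ctr)
  (hport : valid_portals d v eps k N ctr P) (hord : valid_order d v eps N P q).

Definition Qs := Qset d eps N P.
Definition U i := \bigcup_(y in N i) P i y.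

Lemma d0 x : d x x = 0. Proof. by case: hmet. Qed.
Lemma dsym x y : d x y = d y x. Proof. by case: hmet. Qed.
Lemma dtri x y z : d x z <= d x y + d y z. Proof. by case: hmet. Qed.
Lemma dge0 x y : 0 <= d x y.
Proof. have [->|/hsep1 h] := eqVneq x y; [by rewrite d0 | lra]. Qed.

Lemma memq x : (x \in q) = (x \in Qs).
Proof. by case: hord => /perm_mem -> _; rewrite mem_enum. Qed.

Lemma uniq_q : uniq q.
Proof. by case: hord => /perm_uniq -> _; exact: enum_uniq. Qed.

Lemma he3' : 3 * eps <= 1.
Proof.
have h : (0 : R) <= 3 by lra.
have := ler_wpM2l h he3; rewrite mulfV //; lra.
Qed.

Lemma radpos i : 0 < Defs.rad eps i.
Proof. by rewrite /Defs.rad; apply: exprn_gt0; rewrite invr_gt0. Qed.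

Lemma einv1 : 1 < eps^-1.
Proof. rewrite invf_gt1 //; have := he3'; lra. Qed.

Lemma rad_lt i j : (Defs.rad eps i < Defs.rad eps j) = (i < j)%N.
Proof. by rewrite /Defs.rad ltr_eXn2l // einv1. Qed.

Lemma radS i : Defs.rad eps i.+1 = eps^-1 * Defs.rad eps i.
Proof. by rewrite /Defs.rad exprS. Qed.

Lemma memQ x : x \in Qs -> exists i, [/\ in_levels d eps i, x \in U i &
   x \in ring d v eps i].
Proof.
rewrite /Qs /Qset => /bigcupP [[i hi] /= hl] /bigcupP [y hy hx].
exists i; split => //; first by apply/bigcupP; exists y.
have [hsub _] := hport hl hy.
by move: (fintype.subsetP hsub x hx); rewrite inE => /andP[].
Qed.

Lemma ringE i x : (1 <= i)%N -> (x \in ring d v eps i) =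
  (d v x <= Defs.rad eps i) && (Defs.rad eps i.-1 < d v x).
Proof.
move=> hi; rewrite /ring; case: eqP => [|_]; first by move=> e; clear -hi e; lia.
by rewrite inE -real_ltNge // num_real.
Qed.

Lemma inlev1 i : in_levels d eps i -> (1 <= i)%N.
Proof. by case/andP. Qed.

Lemma vnotQ : v \notin Qs.
Proof.
apply/negP => /memQ [i [hl _]]; rewrite ringE ?inlev1 // d0 => /andP[_].
by rewrite ltNge ltW // radpos.
Qed.

Lemma cardU i : in_levels d eps i -> (#|U i| <= #|N i| * k.+1)%N.
Proof.
move=> hl; apply: leq_trans (card_bigcup_le _ _ _ _) _.
rewrite -sum1_card big_distrl /=; apply: leq_sum => y hy.
rewrite mul1n; have [_ ->] := hport hl hy; exact: geq_minl.
Qed.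

Lemma rho_ge1 : 1 <= rho.
Proof.
rewrite leNgt; apply/negP => hr.
have hB : forall x r, exists Cs : {set T}, #|Cs|%:R <= (1 : R) /\
      Defs.ball d x r \subset \bigcup_(c in Cs) Defs.ball d c (r / 2).
  move=> x r; have [Cs [h1 h2]] := hdim.1 x r; exists Cs; split => //.
  rewrite lern1 -ltnS -(ltr_nat R); apply: le_lt_trans h1 _.
  rewrite /powR ifF; last by apply/negbTE; lra.
  rewrite -[X in _ < X]natr1.
  have -> : (1 + 1 : R) = 2 by [].
  rewrite -[X in _ < X](@lnK _ 2) ?posrE // ltr_expR.
  have : 0 < ln (2 : R) by apply: ln_gt0; lra.
  nra.
have : (1 < #|[set: T]|)%N by rewrite cardsT; clear -hk1 hkn; lia.
case/card_gt1P => a [b [_ _ hab]].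
have hdab := hsep1 hab.
have h1 : [set a; b] \subset Defs.ball d a (d a b).
  apply/fintype.subsetP => y; rewrite !inE => /orP[]/eqP ->; rewrite ?d0; lra.
have h2 : forall y1 y2, y1 \in [set a; b] -> y2 \in [set a; b] -> y1 != y2 -> d a b / 2 < d y1 y2.
  move=> y1 y2; rewrite !inE => /orP[]/eqP -> /orP[]/eqP ->; rewrite ?eqxx //;
   rewrite ?(dsym b a); lra.
have h3 : 2 * d a b <= 2 ^+ 2 * (d a b / 2) by rewrite expr2; lra.
have := @packing _ _ d dsym dtri 1 hB 2 a (d a b) (d a b / 2) [set a; b] h1 h2 h3.
by rewrite cards2 hab expr1n lern1.
Qed.




Lemma netcard i : in_levels d eps i -> #|N i|%:R * 2 <= eps `^ (-(4 * rho)).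
Proof.
move=> hl; have hi := inlev1 hl.
have [m [hm1 hm2]] := exists_m he0 he3'.
have [hsub _ hsepN] := hnets hl.
have hY : N i \subset Defs.ball d v (Defs.rad eps i).
  apply/fintype.subsetP => y /(fintype.subsetP hsub); rewrite ringE // inE.
  by case/andP.
have hr : 2 * Defs.rad eps i <= 2 ^+ m * (eps * Defs.rad eps i.-1).
  rewrite -(prednK hi) radS /=.
  have hp := radpos i.-1.
  have -> : 2 ^+ m * (eps * Defs.rad eps i.-1) =
     (2 ^+ m * eps ^+ 2) * (eps^-1 * Defs.rad eps i.-1).
    by rewrite expr2; field; exact: lt0r_neq0.
  apply: ler_wpM2r => //; apply: mulr_ge0; [rewrite invr_ge0; exact: ltW | exact: ltW].
have := @packing _ _ d dsym dtri (2 `^ rho) hdim.1 m v _ _ _ hY hsepN hr.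
have h2 : (2 : R) != 0 by rewrite pnatr_eq0.
rewrite /powR (negbTE h2) (gt_eqF he0).
rewrite -expRM_natl => hN.
have hl2 : 0 < ln (2 : R) by apply: ln_gt0; lra.
have hle : ln eps <= - ln (3 : R).
  rewrite -lnV ?posrE; last lra.
  by rewrite ler_ln ?posrE ?invr_gt0 //; lra.
have t2 : (0:R) < 2 by lra.
have t3 : (0:R) < 3 by lra.
have h98 : 3 * ln (2 : R) <= 2 * ln (3 : R).
  have e2 := lnXn 3 t2; have e3 := lnXn 2 t3.
  have : ln ((2:R)^+3) <= ln ((3:R)^+2).
    by rewrite ler_ln ?posrE ?exprn_gt0 //; rewrite !exprS expr0; lra.
  by rewrite e2 e3; lra.
have hlm : ln (2 : R) * m%:R + 2 * ln eps < 2 * ln (2 : R).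
  have hp : 0 < 2 ^+ m * eps ^+ 2 by apply: mulr_gt0; apply: exprn_gt0.
  have h4 : (0:R) < 4 by lra.
  have := hm2; rewrite -ltr_ln ?posrE //.
  rewrite lnM ?posrE ?exprn_gt0 // (lnXn m t2) (lnXn 2 he0).
  have -> : (4 : R) = 2 ^+ 2 by rewrite expr2; lra.
  rewrite (lnXn 2 t2) -[ln 2 *+ m]mulr_natr !mulr2n; lra.
have hr1 := rho_ge1.
have p1 : 0 <= rho * (2 * ln 2 - 2 * ln eps - ln 2 * m%:R) by apply: mulr_ge0; lra.
have p2 : 0 <= rho * (- ln eps - ln 3) by apply: mulr_ge0; lra.
have p3 : 0 <= rho * (2 * ln 3 - 3 * ln 2) by apply: mulr_ge0; lra.
have p4 : 0 <= (rho - 1) * ln 2 by apply: mulr_ge0; lra.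
have hN2 : #|N i|%:R * 2 <= expR (m%:R * (rho * ln (R:=R) 2)) * 2.
  by apply: ler_wpM2r => //; lra.
apply: le_trans hN2 _.
rewrite -[X in _ * X <= _](@lnK _ 2) ?posrE // -expRD ler_expR.
lra.
Qed.


Lemma epow_ge1 : 1 <= eps `^ (-(4 * rho)).
Proof.
rewrite /powR (gt_eqF he0) leNgt expR_lt1 -leNgt.
have h1 := rho_ge1.
have h2 : ln eps < 0 by apply: ln_lt0; apply/andP; split => //; have := he3'; lra.
nra.
Qed.

Lemma Gam_ge : eps `^ (-(4 * rho)) <= (Gamma eps rho)%:~R.
Proof. exact: ceil_ge. Qed.

Definition G := `|Gamma eps rho|%N.

Lemma GammaE : Gamma eps rho = G%:Z /\ (1 <= G)%N.
Proof.
have h := le_trans epow_ge1 Gam_ge.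
have h1 : (1 <= Gamma eps rho)%R by rewrite -(ler_int R).
rewrite /G; split; first by rewrite gez0_abs //; clear -h1; lia.
clear -h1; lia.
Qed.

Lemma GR : (Gamma eps rho)%:~R = G%:R :> R.
Proof. by rewrite (GammaE.1). Qed.

Lemma sorted_idx x y : x \in q -> y \in q -> (index x q <= index y q)%N -> d v x <= d v y.
Proof.
move=> hx hy hxy.
have hs := hord.2.
have := @sorted_leq_nth _ (fun a b => d v a <= d v b) _ _ v _ hs (index x q) (index y q).
rewrite !nth_index //; apply; rewrite ?inE ?index_mem //.
by move=> b a c /= h1 h2; apply: le_trans h1 h2.
Qed.


Definition U' j := if in_levels d eps j then U j else finset.set0.

Lemma cardU' j : #|U' j|%:R * 2 <= G%:R * k.+1%:R :> R.
Proof.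
rewrite /U'; case: ifP => hl; last first.
  by rewrite cards0 mul0r; apply: mulr_ge0; apply: ler0n.
have h1 := cardU hl.
have h3 := le_trans (netcard hl) Gam_ge; rewrite GR in h3.
have h4 : (#|U j|%:R : R) <= #|N j|%:R * k.+1%:R by rewrite -natrM ler_nat.
have h5 : (0 : R) <= k.+1%:R by apply: ler0n.
have h6 : (0 : R) <= #|N j|%:R by apply: ler0n.
nra.
Qed.

Lemma key a b : a \in q -> b \in q -> (index b q + G * k.+1 < index a q)%N ->
  d v b <= eps * d v a.
Proof.
move=> ha hb hab; rewrite leNgt; apply/negP => hlt.
have haQ : a \in Qs by rewrite -memq.
have [i [hl haU har]] := memQ haQ.
have hW : posset q (index b q) (index a q).+1 \subset U' i.-1 :|: U' i.
  apply/fintype.subsetP => w; rewrite inE => /andP[hw /andP[h1 h2]].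
  have hwQ : w \in Qs by rewrite -memq.
  have [i' [hl' hwU hwr]] := memQ hwQ.
  have dwa : d v w <= d v a by apply: sorted_idx => //; clear -h2; lia.
  have dbw : d v b <= d v w by apply: sorted_idx.
  move: har hwr; rewrite !ringE ?inlev1 // => /andP[ha1 ha2] /andP[hw1 hw2].
  have hi'i : (i' <= i)%N.
    have : Defs.rad eps i'.-1 < Defs.rad eps i by lra.
    rewrite rad_lt => hh.
    exact: leq_trans (leqSpred i') hh.
  have hii' : (i.-1 <= i')%N.
    case: (ltnP i 2) => hi2; first by have -> : i.-1 = 0%N by clear -hi2; lia.
    have e : eps * Defs.rad eps i.-1 = Defs.rad eps i.-2.
      rewrite (_ : i.-1 = i.-2.+1); last by clear -hi2; lia.
      by rewrite radS mulrA mulfV ?mul1r //; exact: lt0r_neq0.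
    have : eps * Defs.rad eps i.-1 < eps * d v a by rewrite ltr_pM2l.
    rewrite e => h3.
    have : Defs.rad eps i.-2 < Defs.rad eps i' by lra.
    rewrite rad_lt => hh; clear -hh hi2; lia.
  have : i' = i.-1 \/ i' = i by clear -hi'i hii'; lia.
  rewrite inE /U'; case => <-; rewrite hl' hwU ?orbT //.
have hia : (index a q < size q)%N by rewrite index_mem.
have c1 := @card_pos_ge _ q v (index b q) (index a q).+1 uniq_q hia.
have c2 := subset_leq_card hW.
have c3 := (leq_card_setU (U' i.-1) (U' i)).1.
have c4 : (G * k.+1 + 2 <= #|U' i.-1| + #|U' i|)%N by clear -c1 c2 c3 hab; lia.
have := cardU' i.-1; have := cardU' i.
move: c4; rewrite -(ler_nat R) !natrD natrM => c4 h1 h2.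
lra.
Qed.


Lemma ceil_spec2 (j g : int) :
  let p := Num.ceil ((j%:~R - 2 * g%:~R - 1) / 2 : R) in
  (2 * p - 2 < j - 2 * g - 1)%R /\ (j - 2 * g - 1 <= 2 * p)%R.
Proof.
move=> p; have /andP[h1 h2] := ceil_itv ((j%:~R - 2 * g%:~R - 1) / 2 : R).
rewrite -/p in h1 h2.
split.
- rewrite -(ltr_int R) !intrD !intrM !intrN /=. rewrite intrD intrN in h1. lra.
- rewrite -(ler_int R) !intrD !intrM !intrN /=. lra.
Qed.

Lemma partner_spec (j : int) :
  (2 * partner eps rho j - 2 < j - 2 * G%:Z - 1)%R /\
  (j - 2 * G%:Z - 1 <= 2 * partner eps rho j)%R.
Proof. by rewrite -(GammaE.1); exact: ceil_spec2. Qed.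

Local Notation A := (Agrp v k q).
Definition grp x := (index x q %/ k.+1).+1.

Lemma AgrpE (j : int) : (0 < j)%R ->
  A j = posset q ((`|j|%N).-1 * k.+1) (`|j|%N * k.+1).
Proof. by move=> hj; rewrite /Agrp leNgt hj. Qed.

Lemma Agrp_nonpos (j : int) : (j <= 0)%R -> A j = [set v].
Proof. by move=> hj; rewrite /Agrp hj. Qed.

Lemma mem_grp x : x \in q -> x \in A (grp x)%:Z.
Proof.
move=> hx; rewrite AgrpE // inE hx /= /grp.
move: (index x q) => n; clear.
have := divn_eq n k.+1; have := ltn_pmod n (ltn0Sn k).
lia.
Qed.


Lemma in_grp x (j : int) : (0 < j)%R -> x \in A j -> x \in q /\ j = (grp x)%:Z.
Proof.
case: j => [[|n]|n] // hj; rewrite AgrpE // inE => /andP[hx /andP[h1 h2]].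
split => //; rewrite /grp; congr Posz; congr S.
move: h1 h2 => /=; move: (index x q) => m; clear.
have := divn_eq m k.+1; have := ltn_pmod m (ltn0Sn k).
nia.
Qed.

Definition Hq := HQ_edge v eps k q rho.

Lemma edge_down x (j : int) y : (0 < j)%R -> x \in A j ->
  y \in A (partner eps rho j) -> Hq y x /\ Hq x y.
Proof.
move=> hj hx hy.
have ne : A j != finset.set0 by apply/set0Pn; exists x.
by split; exists j; do 2 split => //; [right | left].
Qed.


Lemma grp_ge1 x : (1 <= grp x)%N. Proof. by []. Qed.

Lemma direct_path (S : {set T}) x : v \notin S -> x \in q -> x \notin S ->
  (partner eps rho (grp x)%:Z <= 0)%R ->
  exists p, [/\ is_walk (fun a b => Hq a b /\ a \notin S /\ b \notin S) v p,
     last v p = x, wlen d v p <= (1 + 3 * eps) * d v x & (size p <= 1)%N].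
Proof.
move=> hvS hx hxS hp; exists [:: x]; split => //=.
- split => //; split; last by [].
  have := @edge_down x (grp x)%:Z v isT (mem_grp hx).
  by rewrite Agrp_nonpos // inE eqxx => /(_ isT) [].
- rewrite addr0; have := dge0 v x; have := he0; nra.
Qed.

Lemma path_ex (S : {set T}) : v \notin S -> (#|S| <= k)%N ->
  forall t x, x \in q -> x \notin S -> (grp x <= 2 ^ t)%N ->
  exists p, [/\ is_walk (fun a b => Hq a b /\ a \notin S /\ b \notin S) v p,
     last v p = x, wlen d v p <= (1 + 3 * eps) * d v x & (size p <= t.+1)%N].
Proof.
move=> hvS hS; elim=> [|t IH] x hx hxS hg.
  have [h1 h2] := partner_spec (grp x)%:Z.
  have := GammaE.2 => hG1.
  have hp0 : (partner eps rho (grp x)%:Z <= 0)%R.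
    rewrite expn0 in hg; clear -h1 h2 hG1 hg; lia.
  have [p [h3 h4 h5 h6]] := direct_path hvS hx hxS hp0.
  by exists p.
have [h1 h2] := partner_spec (grp x)%:Z.
have hG1 := GammaE.2.
set p := partner eps rho (grp x)%:Z in h1 h2.
have [hp|hp] := lerP p 0.
  have [p' [h3 h4 h5 h6]] := direct_path hvS hx hxS hp.
  by exists p'; split => //; apply: leq_trans h6 _.
have hpA := AgrpE hp.
have hpg : (`|p|%N + G <= (grp x).-1)%N by clear -h1 h2 hp hG1; lia.
have hix : ((grp x).-1 * k.+1 <= index x q)%N.
  by rewrite /grp /= leq_trunc_div.
have hsz : (index x q < size q)%N by rewrite index_mem.
have hcard : (k.+1 <= #|A p|)%N.
  rewrite hpA.
  have := @card_pos_ge _ q v ((`|p|%N).-1 * k.+1) (`|p|%N * k.+1) uniq_q.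
  have hps : (`|p|%N * k.+1 <= size q)%N.
    apply: leq_trans (_ : (grp x).-1 * k.+1 <= _)%N; last by apply: ltnW; apply: leq_trans hsz; clear -hix; lia.
    by rewrite leq_mul2r; clear -hpg; lia.
  move/(_ hps); rewrite -mulnBl; have : (0 < `|p|)%N by clear -hp; lia.
  by case: `|p|%N => //= n _; rewrite subSn // subnn mul1n.
have : ~~ (A p \subset S).
  apply/negP => /subset_leq_card h; clear -h hcard hS; lia.
case/subsetPn => y hyA hyS.
have [hyq hpy] := in_grp hp hyA.
have hgy : (grp y <= 2 ^ t)%N.
  rewrite expnS in hg; clear -hg hpy h1 h2 hG1; lia.
have [p' [hw hl hwl hsize]] := IH y hyq hyS hgy.
have hiy : (index y q < `|p|%N * k.+1)%N.
  by move: hyA; rewrite hpA inE => /andP[_ /andP[_]].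
have hkey : d v y <= eps * d v x.
  apply: key => //.
  apply: leq_trans (_ : `|p|%N * k.+1 + G * k.+1 <= _)%N; first by rewrite ltn_add2r.
  rewrite -mulnDl; apply: leq_trans hix; rewrite leq_mul2r; clear -hpg; lia.
exists (rcons p' x); split.
- have [e1 _] := edge_down (isT : (0 < (grp x)%:Z)%R) (mem_grp hx) hyA.
  apply/(is_walk_rcons _ v p' x); split; first exact: hw.
  by rewrite hl.
- by rewrite last_rcons.
- rewrite wlen_rcons hl; clearbody p.
  have t1 := dtri y v x; rewrite (dsym y v) in t1.
  have hy0 := dge0 v y; have hx0 := dge0 v x.
  have h13 : (0:R) <= 1 + 3 * eps.
    have he0' := he0; lra.
  have H1 := ler_wpM2l h13 hkey.
  have := he3'; nra.
- by rewrite size_rcons.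
Qed.


Lemma cardA j : (#|A j| <= k.+1)%N.
Proof.
have [hj|hj] := lerP j 0; first by rewrite Agrp_nonpos // cards1.
rewrite AgrpE //; apply: leq_trans (card_pos_le _ v _ _) _.
rewrite -mulnBl; have : (0 < `|j|)%N by clear -hj; lia.
by case: `|j|%N => //= n _; rewrite subSn // subnn mul1n.
Qed.

Lemma vnq : v \notin q.
Proof. by rewrite memq vnotQ. Qed.

Lemma deg_nat x : (#|[set y | `[< Hq x y >]]| <= 6 * G * k)%N.
Proof.
have hG1 := GammaE.2.
have [->|hxv] := eqVneq x v.
  have hsub : [set y | `[< Hq v y >]] \subset posset q 0 ((2 * G).+1 * k.+1).
    apply/fintype.subsetP => y; rewrite inE => /asboolP [j [hj [_ hc]]].
    case: hc => [[hvA _]|[hyA hvA]].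
      by have [] := in_grp hj hvA; rewrite (negbTE vnq).
    have [hp|hp] := lerP (partner eps rho j) 0; last first.
      by have [] := in_grp hp hvA; rewrite (negbTE vnq).
    have [h1 h2] := partner_spec j.
    have [hyq hjy] := in_grp hj hyA.
    move: hyA; rewrite AgrpE // inE => /andP[_ /andP[_ hi]].
    rewrite inE hyq /=; apply: leq_trans hi _; rewrite leq_mul2r; clear -h1 h2 hp hj; lia.
  apply: leq_trans (subset_leq_card hsub) _.
  apply: leq_trans (card_pos_le _ v _ _) _; rewrite subn0.
  have : ((2 * G).+1 * k.+1 <= 6 * G * k)%N by clear -hG1 hk1; nia.
  done.
set g := grp x.
have hsub : [set y | `[< Hq x y >]] \subset
   A (partner eps rho g%:Z) :|: (A (2 * g + 2 * G)%N%:Z :|: A (2 * g + 2 * G).+1%:Z).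
  apply/fintype.subsetP => y; rewrite inE => /asboolP [j [hj [_ hc]]].
  case: hc => [[hxA hyA]|[hyA hxA]].
    by have [_ e] := in_grp hj hxA; rewrite inE -/g -e hyA.
  have [hp|hp] := lerP (partner eps rho j) 0.
    by move: hxA; rewrite Agrp_nonpos // inE (negbTE hxv).
  have [_ e] := in_grp hp hxA.
  have [h1 h2] := partner_spec j.
  rewrite -/g in e; rewrite e in h1 h2.
  have : j = (2 * g + 2 * G)%N%:Z \/ j = (2 * g + 2 * G).+1%:Z by clear -h1 h2; lia.
  case => e'; rewrite e' in hyA; apply/setUP; right; apply/setUP; [left | right]; exact: hyA.
apply: leq_trans (subset_leq_card hsub) _.
apply: leq_trans (leq_card_setU _ _).1 _.
have c1 := cardA (partner eps rho g%:Z).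
have c2 := (leq_card_setU (A (2 * g + 2 * G)%N%:Z) (A (2 * g + 2 * G).+1%:Z)).1.
have c3 := cardA (2 * g + 2 * G)%N%:Z.
have c4 := cardA (2 * g + 2 * G).+1%:Z.
clear -c1 c2 c3 c4 hG1 hk1; nia.
Qed.


Lemma size_q : (size q <= #|T|)%N.
Proof. by rewrite (perm_size hord.1) -cardE max_card. Qed.

Lemma main_sec :
    let Q := Qset d eps N P in
    let H := HQ_edge v eps k q rho in
    (forall S : {set T}, S \subset Q -> (#|S| <= k)%N ->
       forall x, x \in Q :\: S ->
       exists p : seq T,
         [/\ is_walk (fun a b => H a b /\ a \notin S /\ b \notin S) v p,
             last v p = x
           & wlen d v p <= (1 + 3 * eps) * d v x]) /\
    (forall x : T,
       (#|[set y | `[< H x y >]]|%:R <= (6%N)%:R * (Gamma eps rho)%:~R * k%:R :> R)) /\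
    (forall x, x \in Q ->
       exists p : seq T,
         [/\ is_walk H v p, last v p = x,
             wlen d v p <= (1 + 3 * eps) * d v x
           & (size p)%:R <= (6%N)%:R * ln (#|T|%:R : R)]).
Proof using All.
move=> Q0 H0; split; [|split].
- move=> S hSQ hS x; rewrite inE => /andP[hxS hxQ].
  have hvS : v \notin S.
    by apply/negP => /(fintype.subsetP hSQ); apply/negP; exact: vnotQ.
  have hxq : x \in q by rewrite memq.
  have [p [h1 h2 h3 _]] := path_ex hvS hS hxq hxS (ltnW (ltn_expl (grp x) (isT : (1 < 2)%N))).
  by exists p.
- move=> x; have := deg_nat x; rewrite -(ler_nat R) => h; apply: le_trans h _.
  by rewrite GR !natrM.
- move=> x hxQ.
  have hvS : v \notin finset.set0 by rewrite inE.
  have hS : (#|finset.set0 : {set T}| <= k)%N by rewrite cards0.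
  have hxq : x \in q by rewrite memq.
  have hix : (index x q < size q)%N by rewrite index_mem.
  have hn := size_q.
  have hn3 : (3 <= #|T|)%N by clear -hk1 hkn; lia.
  set tl := trunc_log 2 #|T|.
  have hg : (grp x <= 2 ^ tl.+1)%N.
    apply: leq_trans (ltnW (trunc_log_ltn #|T| (isT : (1 < 2)%N))).
    apply: leq_trans hn; apply: leq_trans hix; rewrite /grp ltnS; exact: leq_div.
  have hxS : x \notin (finset.set0 : {set T}) by rewrite inE.
  have [p [h1 h2 h3 h4]] := path_ex hvS hS hxq hxS hg.
  exists p; split => //.
  + refine (is_walk_mono h1 _); by move=> a b [].
  + apply: le_trans (_ : (tl.+2)%:R <= _); first by rewrite ler_nat.
    apply: hop_bound => //; apply: trunc_logP => //; clear -hn3; lia.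
Qed.

End Main.

Theorem lemma11 :
  exists C : nat,
  forall (R : realType) (T : finType) (d : T -> T -> R) (rho eps : R) (k : nat)
    (v : T) (N : nat -> {set T}) (ctr : nat -> T -> T) (P : nat -> T -> {set T})
    (q : seq T),
    is_metric d ->
    (forall x y : T, x != y -> 1 < d x y) ->
    is_doubling_dim d rho ->
    (1 <= k)%N -> (k <= #|T| - 2)%N ->
    0 < eps -> eps <= 3^-1 ->
    valid_nets d v eps N ->
    valid_ctr d v eps N ctr ->
    valid_portals d v eps k N ctr P ->
    valid_order d v eps N P q ->
    let Q := Qset d eps N P in
    let H := HQ_edge v eps k q rho in
    (* (k, 1+3eps, v)-vertex-fault-tolerant single-sink spanner *)
    (forall S : {set T}, S \subset Q -> (#|S| <= k)%N ->
       forall x, x \in Q :\: S ->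
       exists p : seq T,
         [/\ is_walk (fun a b => H a b /\ a \notin S /\ b \notin S) v p,
             last v p = x
           & wlen d v p <= (1 + 3 * eps) * d v x]) /\
    (* maximum degree O(Gamma k) *)
    (forall x : T,
       (#|[set y | `[< H x y >]]|%:R <= C%:R * (Gamma eps rho)%:~R * k%:R :> R)) /\
    (* hop-diameter O(log n) *)
    (forall x, x \in Q ->
       exists p : seq T,
         [/\ is_walk H v p, last v p = x,
             wlen d v p <= (1 + 3 * eps) * d v x
           & (size p)%:R <= C%:R * ln (#|T|%:R : R)]).
Proof.
exists 6%N => R T d rho eps k v N ctr P q hmet hsep1 hdim hk1 hkn he0 he3 hnets hctr hport hord.
exact: (main_sec hmet hsep1 hdim hk1 hkn he0 he3 hnets hctr hport hord).
Qed.
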